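(* Let $K$ be a field, $L$ a right $K$-vector space of dimension $\kappa>1$, and $R$ the endomorphism algebra of $L$. If $\kappa$ is finite, then $R$ has a multiplicative basis but no strong multiplicative basis. If $\kappa$ is infinite, then $R$ has no bounded basis.
   Context: Let $B$ be a $K$-linear basis of a $K$-algebra $R$. For $r\in R$ write $r=\sum_{b\in B} b k_b$, $\mathrm{supp}(r)=\{b\mid k_b\neq 0\}$, $\mathrm{cs}(r)=|\mathrm{supp}(r)|$. $B$ is $k$-bounded ($1\le k<\omega$) if $\mathrm{cs}(bb')\le k$ for all $b,b'\in B$, and bounded if $k$-bounded for some $k$. $B$ is multiplicative if for all $b,b'\in B$ either $bb'=0$ or $bb'\in B$; it is strong multiplicative if $bb'\in B$ for all $b,b'\in B$. *)

(* Defs.v *)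
From HB Require Import structures.
From mathcomp Require Import all_boot all_order all_algebra.
Set Implicit Arguments. Unset Strict Implicit. Unset Printing Implicit Defensive.
Import Order.TTheory GRing.Theory Num.Theory.
Local Open Scope ring_scope.

Section Defs.
Variables (K : fieldType) (L : lmodType K).

Definition vec_basis (n : nat) (v : 'I_n -> L) : Prop :=
  (forall c : 'I_n -> K, \sum_(i < n) c i *: v i = 0 -> forall i, c i = 0) /\
  (forall x : L, exists c : 'I_n -> K, x = \sum_(i < n) c i *: v i).

Definition has_dim (n : nat) : Prop := exists v : 'I_n -> L, vec_basis v.

Definition infinite_dim : Prop :=
  forall (n : nat) (v : 'I_n -> L),
    ~ (forall x : L, exists c : 'I_n -> K, x = \sum_(i < n) c i *: v i).

(* elements of R: K-linear maps L -> L; product in R is composition *)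
Definition is_endo (f : L -> L) : Prop :=
  forall (a : K) (x y : L), f (a *: x + y) = a *: f x + f y.

Definition endo_mul (f g : L -> L) : L -> L := fun x => f (g x).

Definition endo_zero : L -> L := fun _ => 0.

Definition endo_comb (n : nat) (f : 'I_n -> (L -> L)) (c : 'I_n -> K) : L -> L :=
  fun x => \sum_(i < n) c i *: f i x.

Definition endo_basis (B : (L -> L) -> Prop) : Prop :=
  (forall b, B b -> is_endo b) /\
  (forall (n : nat) (f : 'I_n -> (L -> L)) (c : 'I_n -> K),
      injective f -> (forall i, B (f i)) ->
      endo_comb f c = endo_zero -> forall i, c i = 0) /\
  (forall r, is_endo r ->
      exists (n : nat) (f : 'I_n -> (L -> L)) (c : 'I_n -> K),
        (forall i, B (f i)) /\ r = endo_comb f c).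

(* cs(r) <= k with respect to the basis B: r is a linear combination of at
   most k elements of B (equivalently |supp(r)| <= k, B being a basis) *)
Definition cs_le (B : (L -> L) -> Prop) (k : nat) (r : L -> L) : Prop :=
  exists (n : nat) (f : 'I_n -> (L -> L)) (c : 'I_n -> K),
    (n <= k)%N /\ (forall i, B (f i)) /\ r = endo_comb f c.

Definition k_bounded (B : (L -> L) -> Prop) (k : nat) : Prop :=
  (1 <= k)%N /\ forall b b', B b -> B b' -> cs_le B k (endo_mul b b').

Definition bounded_basis (B : (L -> L) -> Prop) : Prop :=
  endo_basis B /\ exists k, k_bounded B k.

Definition multiplicative_basis (B : (L -> L) -> Prop) : Prop :=
  endo_basis B /\
  forall b b', B b -> B b' -> endo_mul b b' = endo_zero \/ B (endo_mul b b').

Definition strong_multiplicative_basis (B : (L -> L) -> Prop) : Prop :=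
  endo_basis B /\ forall b b', B b -> B b' -> B (endo_mul b b').

End Defs.

(* Main.v *)
From HB Require Import structures.
Require Import Defs.
From mathcomp Require Import all_boot all_order all_algebra.
From mathcomp Require Import boolp classical_sets.
From mathcomp Require Import zify.
From Stdlib Require Import ClassicalEpsilon.
Set Implicit Arguments. Unset Strict Implicit. Unset Printing Implicit Defensive.
Import Order.TTheory GRing.Theory Num.Theory.
Local Open Scope ring_scope.
Section Gen.
Variables (K : fieldType) (L : lmodType K).
Notation E := (L -> L).

Lemma endo0 (f : E) : is_endo f -> f 0 = 0.
Proof.
move=> hf; have H := hf 1 0 0; rewrite !scale1r !addr0 in H.
by apply: (@addrI _ (f 0)); rewrite addr0 -H.
Qed.

Lemma endoZ (f : E) a x : is_endo f -> f (a *: x) = a *: f x.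
Proof. by move=> hf; have := hf a x 0; rewrite !addr0 (endo0 hf) addr0. Qed.

Lemma endoD (f : E) x y : is_endo f -> f (x + y) = f x + f y.
Proof. by move=> hf; have := hf 1 x y; rewrite !scale1r. Qed.

Lemma endo_sum (f : E) n (F : 'I_n -> L) : is_endo f ->
  f (\sum_(i < n) F i) = \sum_(i < n) f (F i).
Proof.
move=> hf; apply: (big_morph f (fun x y => endoD x y hf) (endo0 hf)).
Qed.

Lemma sum_cat (V : zmodType) m0 m (G : nat -> V) :
  \sum_(k < m0 + m) G k = \sum_(k < m0) G k + \sum_(k < m) G (m0 + k)%N.
Proof. by rewrite big_split_ord. Qed.

Lemma sum_if_eq (V : zmodType) m i (F : nat -> V) : (i < m)%N ->
  \sum_(k < m) (if k == i :> nat then F k else 0) = F i.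
Proof.
move=> hi; rewrite (bigD1_ord (Ordinal hi)) //= eqxx big1 ?addr0 // => k _.
by rewrite eq_sym (negbTE (neq_bump _ _)).
Qed.

Lemma sum_remove (V : zmodType) m j (G : nat -> V) : (j < m.+1)%N ->
  \sum_(k < m.+1) G k = G j + \sum_(k < m) G (bump j k).
Proof. by move=> hj; rewrite (bigD1_ord (Ordinal hj)) //=. Qed.

Definition ncomb m (h : nat -> E) (e : nat -> K) : E :=
  fun x => \sum_(k < m) e k *: h k x.

Definition catf {T} m0 (f g : nat -> T) k := if (k < m0)%N then f k else g (k - m0)%N.

Definition ordfam {T} n (f : 'I_n -> T) (d : T) (k : nat) : T :=
  if insub k is Some i then f i else d.

Lemma ordfamE {T} n (f : 'I_n -> T) d (i : 'I_n) : ordfam f d i = f i.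
Proof. by rewrite /ordfam valK. Qed.

Variable B : E -> Prop.

Definition Rep (r : E) m h e := (forall k, (k < m)%N -> B (h k)) /\ r = ncomb m h e.
Definition HasRep r := exists m h e, Rep r m h e.
Definition SpanLe N r := exists m h e, (m <= N)%N /\ Rep r m h e.

Lemma Rep_add x y m h e m' h' e' : Rep x m h e -> Rep y m' h' e' ->
  Rep (fun w => x w + y w) (m + m') (catf m h h') (catf m e e').
Proof.
move=> [hB ->] [hB' ->]; split.
  move=> k hk; rewrite /catf; case: ifP => hkm; first exact: hB.
  apply: hB'; move: hk hkm; lia.
apply: funext => w; rewrite /ncomb (sum_cat _ _ (fun k => catf m e e' k *: catf m h h' k w)).
congr (_ + _); apply: eq_bigr => i _.
  by rewrite /catf ltn_ord.
by rewrite /catf ltnNge leq_addr /= addKn.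
Qed.

Lemma Rep_scale a x m h e : Rep x m h e ->
  Rep (fun w => a *: x w) m h (fun k => a * e k).
Proof.
move=> [hB ->]; split => //; apply: funext => w; rewrite /ncomb scaler_sumr.
by apply: eq_bigr => i _; rewrite scalerA.
Qed.

Lemma Rep0 h e : Rep (fun _ => 0) 0 h e.
Proof. by split => // ; apply: funext => w; rewrite /ncomb big_ord0. Qed.

Lemma Rep1 b : B b -> Rep b 1 (fun _ => b) (fun _ => 1).
Proof. by move=> hb; split => //; apply: funext => w; rewrite /ncomb big_ord1 scale1r. Qed.

Lemma HasRep_add x y : HasRep x -> HasRep y -> HasRep (fun w => x w + y w).
Proof. by move=> [m [h [e hx]]] [m' [h' [e' hy]]]; do 3 eexists; apply: Rep_add hx hy. Qed.

Lemma HasRep_scale a x : HasRep x -> HasRep (fun w => a *: x w).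
Proof. by move=> [m [h [e hx]]]; do 3 eexists; apply: Rep_scale hx. Qed.

Lemma HasRep0 : HasRep (fun _ => 0).
Proof. by exists 0%N, (fun _ => fun _ => 0), (fun _ => 0); apply: Rep0. Qed.

Lemma HasRep_sum n (F : 'I_n -> E) : (forall i, HasRep (F i)) ->
  HasRep (fun w => \sum_(i < n) F i w).
Proof.
elim: n F => [|n IH] F hF.
  have -> : (fun w => \sum_(i < 0) F i w) = fun _ => 0.
    by apply: funext => w; rewrite big_ord0.
  exact: HasRep0.
have -> : (fun w => \sum_(i < n.+1) F i w) =
  fun w => (fun w => \sum_(i < n) F (widen_ord (leqnSn n) i) w) w + F ord_max w.
  by apply: funext => w; rewrite big_ord_recr.
by apply: HasRep_add => //; apply: IH.
Qed.

Lemma SpanLe_add a b x y : SpanLe a x -> SpanLe b y -> SpanLe (a + b) (fun w => x w + y w).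
Proof.
move=> [m [h [e [hm hx]]]] [m' [h' [e' [hm' hy]]]]; do 3 eexists; split;
  last exact: Rep_add hx hy.
by rewrite leq_add.
Qed.

Lemma SpanLe_scale a c x : SpanLe a x -> SpanLe a (fun w => c *: x w).
Proof. by move=> [m [h [e [hm hx]]]]; do 3 eexists; split; last exact: Rep_scale hx. Qed.

Lemma SpanLe_mono a b x : SpanLe a x -> (a <= b)%N -> SpanLe b x.
Proof. by move=> [m [h [e [hm hx]]]] hab; do 3 eexists; split; last exact: hx; apply: leq_trans hab. Qed.

Lemma SpanLe_sum n a (F : 'I_n -> E) : (forall i, SpanLe a (F i)) ->
  SpanLe (n * a) (fun w => \sum_(i < n) F i w).
Proof.
elim: n F => [|n IH] F hF.
  have -> : (fun w => \sum_(i < 0) F i w) = fun _ => 0.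
    by apply: funext => w; rewrite big_ord0.
  by exists 0%N, (fun _ => fun _ => 0), (fun _ => 0); split => //; apply: Rep0.
have -> : (fun w => \sum_(i < n.+1) F i w) =
  fun w => (fun w => \sum_(i < n) F (widen_ord (leqnSn n) i) w) w + F ord_max w.
  by apply: funext => w; rewrite big_ord_recr.
by rewrite mulSnr; apply: SpanLe_add => //; apply: IH.
Qed.

Lemma cs_SpanLe N r : cs_le B N r -> SpanLe N r.
Proof.
move=> [m [f [c [hm [hB ->]]]]].
exists m, (ordfam f (fun _ => 0)), (ordfam c 0); split => //; split.
  by move=> k hk; have -> : k = Ordinal hk by []; rewrite ordfamE.
by apply: funext => x; rewrite /ncomb /endo_comb; apply: eq_bigr => i _; rewrite !ordfamE.
Qed.

Lemma SpanLe_cs N r : SpanLe N r -> cs_le B N r.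
Proof.
move=> [m [h [e [hm [hB ->]]]]].
exists m, (fun i : 'I_m => h i), (fun i : 'I_m => e i); split => //; split => //.
by move=> i; apply: hB.
Qed.

End Gen.
Section Bas.
Variables (K : fieldType) (L : lmodType K).
Notation E := (L -> L).
Variable B : E -> Prop.
Hypothesis HB : endo_basis B.

Lemma merge (w : E -> K) m : forall h e, (forall k, (k < m)%N -> B (h k)) ->
  ncomb m h e = (fun _ => 0) -> \sum_(k < m) e k * w (h k) = 0.
Proof.
elim: m => [|m IH] h e hB h0; first by rewrite big_ord0.
case: (pselect (exists i j, (i < j)%N /\ (j < m.+1)%N /\ h i = h j)).
  move=> [i [j [ij [jm hij]]]].
  have hi : (i < m)%N by move: ij jm; lia.
  have bji : bump j i = i by rewrite /bump leqNgt ij.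
  pose h' := fun k => h (bump j k).
  pose e' := fun k => e (bump j k) + (if k == i then e j else 0).
  have := IH h' e'.
  have hB' : forall k, (k < m)%N -> B (h' k).
    move=> k hk; apply: hB; rewrite /bump; case: (j <= k)%N; move: hk; lia.
  have h0' : ncomb m h' e' = (fun _ => 0).
    apply: funext => x; have := congr1 (fun f => f x) h0; rewrite /ncomb /=.
    rewrite (sum_remove (fun k => e k *: h k x) jm) => H.
    have -> : \sum_(k < m) e' k *: h' k x =
       \sum_(k < m) e (bump j k) *: h (bump j k) x +
       \sum_(k < m) (if k == i :> nat then e j *: h' k x else 0).
      rewrite -big_split /=; apply: eq_bigr => k _; rewrite /e' scalerDl.
      by case: (k == i :> nat); rewrite ?scale0r.
    rewrite (sum_if_eq (fun k => e j *: h' k x) hi) /h' bji hij.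
    by rewrite addrC.
  move=> /(_ hB' h0') H.
  rewrite (sum_remove (fun k => e k * w (h k)) jm); rewrite -[RHS]H.
  have -> : \sum_(k < m) e' k * w (h' k) =
       \sum_(k < m) e (bump j k) * w (h (bump j k)) +
       \sum_(k < m) (if k == i :> nat then e j * w (h' k) else 0).
    rewrite -big_split /=; apply: eq_bigr => k _; rewrite /e' mulrDl.
    by case: (k == i :> nat); rewrite ?mul0r ?addr0.
  by rewrite (sum_if_eq (fun k => e j * w (h' k)) hi) /h' bji hij addrC.
move=> nodup.
have hinj : injective (fun i : 'I_m.+1 => h i).
  move=> a b hab; apply: val_inj => /=; case: (ltngtP a b) => // hab';
  exfalso; apply: nodup.
    by exists a, b; split => //; split => //; apply: ltn_ord.
  by exists b, a; split => //; split => //; apply: ltn_ord.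
have hB2 : forall i : 'I_m.+1, B (h i) by move=> i; apply: hB.
have := (proj1 (proj2 HB)) m.+1 (fun i : 'I_m.+1 => h i) (fun i : 'I_m.+1 => e i) hinj hB2.
move=> /(_ h0) hc.
by apply: big1 => i _; rewrite hc mul0r.
Qed.

Definition Phi (w : E -> K) (r : E) : K :=
  let t := epsilon (inhabits (0%N, (fun _ : nat => r), (fun _ : nat => (0 : K))))
     (fun t : nat * (nat -> E) * (nat -> K) => Rep B r t.1.1 t.1.2 t.2) in
  \sum_(k < t.1.1) t.2 k * w (t.1.2 k).

Lemma Phi_spec w r m h e : Rep B r m h e -> Phi w r = \sum_(k < m) e k * w (h k).
Proof.
move=> hr; rewrite /Phi.
set t := epsilon _ _.
have ht : Rep B r t.1.1 t.1.2 t.2.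
  by apply: (epsilon_spec _ (fun t : nat * (nat -> E) * (nat -> K) => Rep B r t.1.1 t.1.2 t.2)); exists (m, h, e).
have hc := Rep_add ht (Rep_scale (-1) hr).
have hz : (fun w0 => r w0 + -1 *: r w0) = (fun _ => 0).
  by apply: funext => x; rewrite scaleN1r subrr.
rewrite hz in hc.
have := merge w (proj1 hc) (esym (proj2 hc)).
rewrite (sum_cat _ _ (fun k => catf t.1.1 t.2 (fun k => -1 * e k) k * w (catf t.1.1 t.1.2 h k))).
have -> : \sum_(k < t.1.1) catf t.1.1 t.2 (fun k => -1 * e k) k * w (catf t.1.1 t.1.2 h k)
   = \sum_(k < t.1.1) t.2 k * w (t.1.2 k).
  by apply: eq_bigr => i _; rewrite /catf ltn_ord.
have -> : \sum_(k < m) catf t.1.1 t.2 (fun k => -1 * e k) (t.1.1 + k)%N * w (catf t.1.1 t.1.2 h (t.1.1 + k)%N)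
   = - \sum_(k < m) e k * w (h k).
  rewrite -sumrN; apply: eq_bigr => i _; rewrite /catf ltnNge leq_addr /= addKn.
  by rewrite mulN1r mulNr.
by move/eqP; rewrite subr_eq0 => /eqP.
Qed.

Lemma endo_HasRep r : is_endo r -> HasRep B r.
Proof.
move=> /(proj2 (proj2 HB)) [n [f [c [hB ->]]]].
exists n, (ordfam f (fun _ => 0)), (ordfam c 0); split.
  by move=> k hk; have -> : k = Ordinal hk by []; rewrite ordfamE.
by apply: funext => x; rewrite /ncomb /endo_comb; apply: eq_bigr => i _; rewrite !ordfamE.
Qed.

Lemma endo_SpanLe r : is_endo r -> exists N, SpanLe B N r.
Proof. by move=> /endo_HasRep [m [h [e hr]]]; exists m, m, h, e. Qed.

Lemma Phi_add w x y a : HasRep B x -> HasRep B y ->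
  Phi w (fun z => x z + a *: y z) = Phi w x + a * Phi w y.
Proof.
move=> [m [h [e hx]]] [m' [h' [e' hy]]].
rewrite (Phi_spec w (Rep_add hx (Rep_scale a hy))) (Phi_spec w hx) (Phi_spec w hy).
rewrite (sum_cat _ _ (fun k => catf m e (fun k => a * e' k) k * w (catf m h h' k))).
congr (_ + _).
  by apply: eq_bigr => i _; rewrite /catf ltn_ord.
rewrite mulr_sumr; apply: eq_bigr => i _; rewrite /catf ltnNge leq_addr /= addKn.
by rewrite mulrA.
Qed.

Lemma Phi0 w : Phi w (fun _ => 0) = 0.
Proof.
by rewrite (Phi_spec w (Rep0 B (fun _ => fun _ => 0) (fun _ => 0))) big_ord0.
Qed.

Lemma Phi_sum w n (X : 'I_n -> E) (c : 'I_n -> K) : (forall i, HasRep B (X i)) ->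
  Phi w (fun z => \sum_(i < n) c i *: X i z) = \sum_(i < n) c i * Phi w (X i).
Proof.
elim: n X c => [|n IH] X c hX.
  have -> : (fun z => \sum_(i < 0) c i *: X i z) = fun _ => 0.
    by apply: funext => z; rewrite big_ord0.
  by rewrite Phi0 big_ord0.
have -> : (fun z => \sum_(i < n.+1) c i *: X i z) =
  fun z => (fun z => \sum_(i < n) c (widen_ord (leqnSn n) i) *: X (widen_ord (leqnSn n) i) z) z
     + c ord_max *: X ord_max z.
  by apply: funext => z; rewrite big_ord_recr.
rewrite Phi_add; first by rewrite IH // big_ord_recr.
  apply: (@HasRep_sum _ _ B n (fun i z => c (widen_ord (leqnSn n) i) *: X (widen_ord (leqnSn n) i) z)).
  by move=> i; apply: HasRep_scale.
exact: hX.
Qed.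

Definition wb (b : E) : E -> K := fun g => if pselect (g = b) then 1 else 0.

Lemma zero_of_coords r : HasRep B r -> (forall b, B b -> Phi (wb b) r = 0) ->
  r = fun _ => 0.
Proof.
move=> [m [h [e hr]]] hc.
elim: m h e hr => [|m IH] h e hr.
  by rewrite (proj2 hr); apply: funext => x; rewrite /ncomb big_ord0.
have hbm : B (h m) by apply: (proj1 hr).
have hs := hc _ hbm; rewrite (Phi_spec _ hr) in hs.
pose e' := fun k => if pselect (h k = h m) then 0 else e k.
apply: (IH h e'); split.
  by move=> k hk; apply: (proj1 hr); apply: ltnW.
apply: funext => x; rewrite (proj2 hr) /ncomb.
have -> : \sum_(k < m.+1) e k *: h k x =
   \sum_(k < m.+1) (e k * wb (h m) (h k)) *: h m x + \sum_(k < m.+1) e' k *: h k x.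
  rewrite -big_split /=; apply: eq_bigr => k _; rewrite /wb /e'.
  destruct (pselect (h k = h m)) as [hk|hk]; last by rewrite mulr0 scale0r add0r.
  by rewrite mulr1 scale0r addr0 hk.
rewrite -scaler_suml hs scale0r add0r big_ord_recr /= /e'.
by destruct (pselect (h m = h m)) as [hmm|hk]; [rewrite scale0r addr0 | exfalso; apply: hk].
Qed.

End Bas.
Section Ech.
Variables (K : fieldType) (L : lmodType K).
Notation E := (L -> L).

Lemma echelon (B : E -> Prop) (A : E -> nat -> K) d :
 (forall c : nat -> K, (forall q, B q -> \sum_(l < d) c l * A q l = 0) ->
    forall l, (l < d)%N -> c l = 0) ->
 exists (p : nat -> E) (y : nat -> nat -> K),
  (forall j, (j < d)%N -> B (p j)) /\
  (forall i j, (i < d)%N -> (j < d)%N -> p i = p j -> i = j) /\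
  (forall i j, (i < d)%N -> (j < d)%N ->
      \sum_(l < d) y i l * A (p j) l = (i == j)%:R).
Proof.
elim: d => [|d IH] H.
  by exists (fun _ => fun _ => 0), (fun _ _ => 0); split; [by [] | split; by []].
have Hd : forall c : nat -> K, (forall q, B q -> \sum_(l < d) c l * A q l = 0) ->
    forall l, (l < d)%N -> c l = 0.
  move=> c hc l hl; pose c' := fun l => if (l < d)%N then c l else 0.
  have hq : forall q, B q -> \sum_(l < d.+1) c' l * A q l = 0.
    move=> q hq; rewrite big_ord_recr /= /c' ltnn mul0r addr0 -[RHS](hc q hq).
    by apply: eq_bigr => i _; rewrite ltn_ord.
  by have := H c' hq l (leq_trans hl (leqnSn d)); rewrite /c' hl.
have [p [y [hpB [hpI hpy]]]] := IH Hd.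
pose cd := fun l => if (l < d)%N then - \sum_(j < d) A (p j) d * y j l else 1.
pose R := fun q => \sum_(l < d.+1) cd l * A q l.
have HR : forall q, R q = A q d - \sum_(j < d) A (p j) d * \sum_(l < d) y j l * A q l.
  move=> q; rewrite /R big_ord_recr /= /cd ltnn mul1r addrC; congr (_ + _).
  rewrite (eq_bigr (fun l : 'I_d => - \sum_(j < d) A (p j) d * y j l * A q l)); last first.
    by move=> l _; rewrite ltn_ord mulNr mulr_suml.
  rewrite sumrN exchange_big /=; congr (- _); apply: eq_bigr => j _.
  by rewrite mulr_sumr; apply: eq_bigr => l _; rewrite mulrA.
have HRp : forall j', (j' < d)%N -> R (p j') = 0.
  move=> j' hj; rewrite HR.
  rewrite (eq_bigr (fun j : 'I_d => if (j == j' :> nat) then A (p j) d else 0)); last first.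
    by move=> j _; rewrite hpy //; case: eqP => _; rewrite ?mulr1 ?mulr0.
  by rewrite (sum_if_eq (fun j => A (p j) d) hj) subrr.
have [b [hb hRb]] : exists b, B b /\ R b != 0.
  case: (pselect (exists b, B b /\ R b != 0)) => // hn; exfalso.
  have hq : forall q, B q -> \sum_(l < d.+1) cd l * A q l = 0.
    move=> q hq; change (R q = 0); case: (R q =P 0) => // hne; exfalso; apply: hn.
    by exists q; split => //; apply/eqP.
  by have := H cd hq d (ltnSn d); rewrite /cd ltnn => /eqP; rewrite oner_eq0.
pose p' := fun j => if (j < d)%N then p j else b.
pose r := R b.
pose yd := fun l => cd l / r.
pose S := fun i => \sum_(l < d) y i l * A b l.
pose y' := fun i l => if (i < d)%N then (if (l < d)%N then y i l else 0) - S i * yd l else yd l.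
have Hyd : forall q, \sum_(l < d.+1) yd l * A q l = R q / r.
  by move=> q; rewrite /R mulr_suml; apply: eq_bigr => l _; rewrite /yd mulrAC.
have Hyi : forall i q, (i < d)%N ->
    \sum_(l < d.+1) y' i l * A q l = \sum_(l < d) y i l * A q l - S i * (R q / r).
  move=> i q hi.
  rewrite (eq_bigr (fun l : 'I_d.+1 => (if (l < d)%N then y i l else 0) * A q l - S i * (yd l * A q l))); last first.
    by move=> l _; rewrite /y' hi mulrBl [in RHS]mulrA.
  rewrite sumrB -mulr_sumr Hyd big_ord_recr /= ltnn mul0r addr0; congr (_ - _).
  by apply: eq_bigr => l _; rewrite ltn_ord.
exists p', y'; split; [|split].
- by move=> j hj; rewrite /p'; case: ifP => hjd; [apply: hpB|].
- move=> i j hi hj; rewrite /p'; case: (ltnP i d) => hid; case: (ltnP j d) => hjd.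
  + by apply: hpI.
  + by move=> hpb; exfalso; move: hRb; rewrite /r -hpb HRp // eqxx.
  + by move=> hbp; exfalso; move: hRb; rewrite /r hbp HRp // eqxx.
  + by move=> _; move: hi hj hid hjd; lia.
- move=> i j hi hj; case: (ltnP i d) => hid.
  + rewrite Hyi //; case: (ltnP j d) => hjd.
      by rewrite /p' hjd HRp // mul0r mulr0 subr0 hpy.
    have -> : j = d by move: hj hjd; lia.
    by rewrite /p' ltnn mulfV // mulr1 subrr ltn_eqF.
  + have -> : i = d by move: hi hid; lia.
    rewrite /y' ltnn Hyd; case: (ltnP j d) => hjd.
      by rewrite /p' hjd HRp // mul0r gtn_eqF.
    have -> : j = d by move: hj hjd; lia.
    by rewrite /p' ltnn eqxx mulfV.
Qed.

End Ech.
Section Low.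
Variables (K : fieldType) (L : lmodType K).
Notation E := (L -> L).
Variable B : E -> Prop.
Hypothesis HB : endo_basis B.

Lemma cs_lower z d (p : nat -> E) : (forall j, (j < d)%N -> B (p j)) ->
  (forall i j, (i < d)%N -> (j < d)%N -> p i = p j -> i = j) ->
  (forall j, (j < d)%N -> Phi B (wb (p j)) z != 0) ->
  forall N, SpanLe B N z -> (d <= N)%N.
Proof.
move=> hpB hpI hz N [m [h [e [hm hr]]]].
have hex : forall j, (j < d)%N -> exists k, (k < m)%N /\ h k = p j.
  move=> j hj; have := hz j hj; rewrite (Phi_spec HB _ hr).
  case: (pselect (exists k, (k < m)%N /\ h k = p j)) => // hn.
  rewrite big1 ?eqxx // => k _; rewrite /wb.
  destruct (pselect (h k = p j)) as [e1|e1]; last by rewrite mulr0.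
  by exfalso; apply: hn; exists k; split => //.
pose sg := fun j => epsilon (inhabits 0%N) (fun k => (k < m)%N /\ h k = p j).
have hsg : forall j, (j < d)%N -> (sg j < m)%N /\ h (sg j) = p j.
  move=> j hj; apply: (epsilon_spec (inhabits 0%N) (fun k => (k < m)%N /\ h k = p j)).
  exact: hex.
pose g := fun j : 'I_d => Ordinal (proj1 (hsg j (ltn_ord j))).
have ginj : injective g.
  move=> a b hab; apply: val_inj.
  have hv : sg a = sg b by exact: (congr1 val hab).
  apply: (hpI a b (ltn_ord a) (ltn_ord b)).
  by rewrite -(proj2 (hsg a (ltn_ord a))) -(proj2 (hsg b (ltn_ord b))) hv.
by have := leq_card g ginj; rewrite !card_ord => hdm; apply: leq_trans hdm hm.
Qed.

Lemma big_lower (x : nat -> E) d : (forall l, (l < d)%N -> HasRep B (x l)) ->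
  (forall c : nat -> K, (fun w => \sum_(l < d) c l *: x l w) = (fun _ => 0) ->
     forall l, (l < d)%N -> c l = 0) ->
  exists c : nat -> K, forall N, SpanLe B N (fun w => \sum_(l < d) c l *: x l w) -> (d <= N)%N.
Proof.
move=> hx hind.
pose A := fun q l => Phi B (wb q) (x l).
have hPhi : forall c q, Phi B (wb q) (fun w => \sum_(l < d) c l *: x l w) = \sum_(l < d) c l * A q l.
  move=> c q.
  exact: (Phi_sum HB (wb q) (fun l : 'I_d => c l) (fun l => hx l (ltn_ord l))).
have hrep : forall c, HasRep B (fun w => \sum_(l < d) c l *: x l w).
  move=> c; apply: (HasRep_sum (F := fun (l : 'I_d) w => c l *: x l w)) => l.
  by apply: HasRep_scale; apply: hx.
have [p [y [hpB [hpI hpy]]]] : exists (p : nat -> E) (y : nat -> nat -> K),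
  (forall j, (j < d)%N -> B (p j)) /\
  (forall i j, (i < d)%N -> (j < d)%N -> p i = p j -> i = j) /\
  (forall i j, (i < d)%N -> (j < d)%N ->
      \sum_(l < d) y i l * A (p j) l = (i == j)%:R).
  apply: echelon => c hc; apply: hind; apply: (zero_of_coords HB (hrep c)) => q hq.
  by rewrite hPhi; apply: hc.
exists (fun l => \sum_(i < d) y i l).
move=> N; apply: (cs_lower hpB hpI) => j hj.
rewrite hPhi.
have -> : \sum_(l < d) (\sum_(i < d) y i l) * A (p j) l = \sum_(i < d) (i == j :> nat)%:R.
  rewrite (eq_bigr (fun l : 'I_d => \sum_(i < d) y i l * A (p j) l)); last first.
    by move=> l _; rewrite mulr_suml.
  by rewrite exchange_big /=; apply: eq_bigr => i _; apply: hpy.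
rewrite (eq_bigr (fun i : 'I_d => if (i == j :> nat) then (1 : K) else 0)); last first.
  by move=> i _; case: eqP.
by rewrite (sum_if_eq (fun _ => (1 : K)) hj) oner_eq0.
Qed.

Lemma SpanLe_comp k x y a b : k_bounded B k -> SpanLe B a x -> SpanLe B b y ->
  SpanLe B (a * (b * k)) (fun w => x (y w)).
Proof.
move=> [_ hk] [m [h [e [hm [hB ->]]]]] [m' [h' [e' [hm' [hB' ->]]]]].
have hend : forall i, (i < m)%N -> is_endo (h i) by move=> i hi; apply: (proj1 HB); apply: hB.
pose F := fun (i : 'I_m) w => e i *: \sum_(j < m') (fun w => e' j *: h i (h' j w)) w.
have -> : (fun w => ncomb m h e (ncomb m' h' e' w)) = fun w => \sum_(i < m) F i w.
  apply: funext => w; rewrite /ncomb; apply: eq_bigr => i _; rewrite /F; congr (_ *: _).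
  rewrite endo_sum; last exact: hend.
  by apply: eq_bigr => j _; rewrite endoZ //; apply: hend.
apply: (SpanLe_mono (a := m * (m' * k))); last by rewrite leq_mul // leq_mul.
apply: SpanLe_sum => i; apply: SpanLe_scale.
apply: (SpanLe_sum (F := fun (j : 'I_m') w => e' j *: h i (h' j w))) => j.
apply: SpanLe_scale; apply: cs_SpanLe.
exact: hk (hB i (ltn_ord i)) (hB' j (ltn_ord j)).
Qed.

End Low.
Section Inf.
Variables (K : fieldType) (L : lmodType K).
Notation E := (L -> L).
Hypothesis hinf : infinite_dim L.

Lemma next_ex (s : seq L) : exists x, forall c : nat -> K, x <> \sum_(i < size s) c i *: s`_i.
Proof.
case: (pselect (exists x, forall c : nat -> K, x <> \sum_(i < size s) c i *: s`_i)) => // hn.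
exfalso.
have H : ~ (forall x : L, exists c : 'I_(size s) -> K, x = \sum_(i < size s) c i *: s`_i) := @hinf (size s) (fun i : 'I_(size s) => s`_i).
apply: H => x.
case: (pselect (exists c : nat -> K, x = \sum_(i < size s) c i *: s`_i)) => [[c hc]|hc].
  by exists (fun i => c i).
by exfalso; apply: hn; exists x => c hxc; apply: hc; exists c.
Qed.

Definition next (s : seq L) : L := epsilon (inhabits 0)
  (fun x => forall c : nat -> K, x <> \sum_(i < size s) c i *: s`_i).

Lemma next_spec s (c : nat -> K) : next s <> \sum_(i < size s) c i *: s`_i.
Proof.
exact: (epsilon_spec (inhabits 0)
  (fun x => forall c : nat -> K, x <> \sum_(i < size s) c i *: s`_i) (next_ex s)) c.
Qed.

Fixpoint vs n := if n is n'.+1 then rcons (vs n') (next (vs n')) else [::].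
Definition vv n := next (vs n).

Lemma size_vs n : size (vs n) = n.
Proof. by elim: n => //= n IH; rewrite size_rcons IH. Qed.

Lemma nth_vs n i : (i < n)%N -> (vs n)`_i = vv i.
Proof.
elim: n => // n IH hi /=; rewrite nth_rcons size_vs.
case: (ltngtP i n) => [hin|hni|->] //; first exact: IH.
by move: hi hni; lia.
Qed.

Lemma vv_indep n (c : nat -> K) : \sum_(i < n) c i *: vv i = 0 ->
  forall i, (i < n)%N -> c i = 0.
Proof.
elim: n => [|n IH] hs i hi; first by [].
rewrite big_ord_recr /= in hs.
have hcn : c n = 0.
  case: (c n =P 0) => // /eqP hne; exfalso.
  apply: (@next_spec (vs n) (fun i => - c i / c n)).
  rewrite size_vs (eq_bigr (fun i : 'I_n => (- c i / c n) *: vv i)); last first.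
    by move=> j _; rewrite nth_vs.
  apply: (scalerI hne); rewrite scaler_sumr.
  rewrite (eq_bigr (fun j : 'I_n => - (c j *: vv j))); last first.
    move=> j _; rewrite scalerA mulrA [c n * _]mulrC -mulrA mulfV // mulr1.
    by rewrite scaleNr.
  rewrite sumrN; move/eqP: hs; rewrite addr_eq0 => /eqP ->.
  by rewrite opprK.
rewrite hcn scale0r addr0 in hs.
move: hi; rewrite ltnS leq_eqVlt => /orP[/eqP ->|hin] //.
exact: IH hs i hin.
Qed.

Lemma vv_neq0 n : vv n != 0.
Proof.
apply/negP => /eqP h0.
have hs : \sum_(i < n.+1) (i == n :> nat)%:R *: vv i = 0.
  rewrite (eq_bigr (fun i : 'I_n.+1 => if (i == n :> nat) then vv i else 0)); last first.
    by move=> i _; case: eqP => _; rewrite ?scale1r ?scale0r.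
  by rewrite (sum_if_eq (fun i => vv i) (ltnSn n)) h0.
by have := @vv_indep n.+1 (fun i : nat => (i == n)%:R) hs n (ltnSn n); rewrite eqxx => /eqP; rewrite oner_eq0.
Qed.

Definition Vspan (x : L) := exists n (c : nat -> K), x = \sum_(i < n) c i *: vv i.

Definition PW (W : set L) : Prop :=
  (forall a x y, W x -> W y -> W (a *: x + y)) /\ (forall x, W x -> Vspan x -> x = 0).

Lemma PW_chain (F : set (set L)) : (F `<=` PW)%classic -> total_on F subset ->
  PW (\bigcup_(X in F) X)%classic.
Proof.
move=> hF htot; split.
  move=> a x y [X FX Xx] [Y FY Yy]; case: (htot X Y FX FY) => hXY.
    by exists Y => //; apply: (proj1 (hF Y FY)) => //; apply: hXY.
  by exists X => //; apply: (proj1 (hF X FX)) => //; apply: hXY.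
by move=> x [X FX Xx] hv; apply: (proj2 (hF X FX)).
Qed.

Definition ext n (c : nat -> K) j := if (j < n)%N then c j else 0.

Lemma sum_ext n N c : (n <= N)%N ->
  \sum_(i < N) ext n c i *: vv i = \sum_(i < n) c i *: vv i.
Proof.
move=> hnN; rewrite (@big_ord_widen _ 0 +%R n N (fun i => c i *: vv i) hnN) [RHS]big_mkcond /=.
by apply: eq_bigr => i _; rewrite /ext; case: ifP => _ //; rewrite scale0r.
Qed.

Section WithA.
Variable A : set L.
Hypothesis PA : PW A.
Hypothesis Amax : forall C : set L, (A `<` C)%classic -> ~ PW C.

Definition A0 u := A u \/ u = 0.

Lemma A0_closed a x y : A0 x -> A0 y -> A0 (a *: x + y).
Proof.
case=> [Ax| ->]; case=> [Ay| ->].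
- by left; apply: (proj1 PA).
- left; rewrite addr0; have := (proj1 PA) (a - 1) x x Ax Ax.
  by rewrite scalerBl scale1r subrK.
- by rewrite scaler0 add0r; left.
- by right; rewrite scaler0 addr0.
Qed.

Lemma A0_V u : A0 u -> Vspan u -> u = 0.
Proof. by case=> [Au|->] // hv; apply: (proj2 PA). Qed.

Lemma decomp w : exists n (c : nat -> K) u, A0 u /\ w = \sum_(i < n) c i *: vv i + u.
Proof.
case: (pselect (exists n (c : nat -> K) u, A0 u /\ w = \sum_(i < n) c i *: vv i + u)) => // hn.
exfalso.
pose C : set L := fun x => exists a u, A0 u /\ x = a *: w + u.
apply: (Amax (C := C)).
  split.
    by move=> x Ax; exists 0, x; split; [left | rewrite scale0r add0r].
  move=> hCA.
  have Aw : A w by apply: hCA; exists 1, 0; split; [right | rewrite scale1r addr0].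
  by apply: hn; exists 0%N, (fun _ => 0), w; split; [left | rewrite big_ord0 add0r].
split.
  move=> a x y [a1 [u1 [hu1 ->]]] [a2 [u2 [hu2 ->]]].
  exists (a * a1 + a2), (a *: u1 + u2); split; first exact: A0_closed.
  by rewrite scalerDr scalerA addrACA -scalerDl.
move=> x [a [u [hu ->]]] [n [c hc]].
case: (a =P 0) => [a0 | /eqP ha].
  rewrite a0 scale0r add0r in hc *.
  by apply: A0_V hu _; exists n, c.
exfalso; apply: hn.
have hu' : A0 ((- a^-1) *: u + 0) by apply: A0_closed => //; right.
exists n, (fun i => c i / a), ((- a^-1) *: u + 0); split => //.
apply: (scalerI ha).
rewrite scalerDr scaler_sumr addr0 scalerA mulrN mulfV // scaleN1r.
rewrite (eq_bigr (fun i : 'I_n => c i *: vv i)); last first.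
  by move=> i _; rewrite scalerA mulrCA mulfV // mulr1.
by rewrite -hc addrK.
Qed.

Lemma decomp_uniq n (c : nat -> K) u n' (c' : nat -> K) u' : A0 u -> A0 u' ->
  \sum_(i < n) c i *: vv i + u = \sum_(i < n') c' i *: vv i + u' ->
  forall j, ext n c j = ext n' c' j.
Proof.
move=> hu hu' heq; pose N := maxn n n'.
have e1 := sum_ext c (leq_maxl n n'); have e2 := sum_ext c' (leq_maxr n n').
have hd : \sum_(i < N) (ext n c i - ext n' c' i) *: vv i = u' - u.
  rewrite (eq_bigr (fun i : 'I_N => ext n c i *: vv i - ext n' c' i *: vv i)); last first.
    by move=> i _; rewrite scalerBl.
  rewrite sumrB e1 e2.
  have : (\sum_(i < n) c i *: vv i + u) - (\sum_(i < n') c' i *: vv i + u') = 0.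
    by rewrite heq subrr.
  rewrite opprD addrACA => /eqP; rewrite addr_eq0 opprB => /eqP //.
have h0 : u' - u = 0.
  apply: A0_V; last by exists N, (fun i => ext n c i - ext n' c' i).
  by have := A0_closed (-1) hu hu'; rewrite scaleN1r addrC.
rewrite h0 in hd.
move=> j; case: (ltnP j N) => hj.
  by have := @vv_indep N (fun i => ext n c i - ext n' c' i) hd j hj => /eqP; rewrite subr_eq0 => /eqP.
rewrite /ext !ifF //; apply/negbTE; rewrite -leqNgt.
  exact: leq_trans (leq_maxr n n') hj.
exact: leq_trans (leq_maxl n n') hj.
Qed.

Definition rep (w : L) : nat * (nat -> K) * L :=
  epsilon (inhabits (0%N, (fun _ => 0), 0))
    (fun t : nat * (nat -> K) * L => A0 t.2 /\ w = \sum_(i < t.1.1) t.1.2 i *: vv i + t.2).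

Lemma rep_spec w : A0 (rep w).2 /\ w = \sum_(i < (rep w).1.1) (rep w).1.2 i *: vv i + (rep w).2.
Proof.
have [n [c [u h]]] := decomp w.
exact: (epsilon_spec _ (fun t : nat * (nat -> K) * L => A0 t.2 /\ w = \sum_(i < t.1.1) t.1.2 i *: vv i + t.2) (ex_intro _ (n, c, u) h)).
Qed.

Definition gam j w := ext (rep w).1.1 (rep w).1.2 j.
Definition bw w := (rep w).1.1.

Lemma gam_unique w n (c : nat -> K) u j : A0 u -> w = \sum_(i < n) c i *: vv i + u -> gam j w = ext n c j.
Proof.
move=> hu hw; have [h1 h2] := rep_spec w.
by apply: (decomp_uniq h1 hu); rewrite -h2 -hw.
Qed.

Lemma gam_bw w j : (bw w <= j)%N -> gam j w = 0.
Proof. by rewrite /gam /ext /bw => h; rewrite ltnNge h. Qed.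

Lemma gam_lin j a x y : gam j (a *: x + y) = a * gam j x + gam j y.
Proof.
pose N := maxn (bw x) (bw y).
have [hux hx] := rep_spec x; have [huy hy] := rep_spec y.
have hdec : a *: x + y = \sum_(i < N) (a * gam i x + gam i y) *: vv i + (a *: (rep x).2 + (rep y).2).
  rewrite [in LHS]hx [in LHS]hy.
  rewrite -(sum_ext (rep x).1.2 (leq_maxl (bw x) (bw y))).
  rewrite -(sum_ext (rep y).1.2 (leq_maxr (bw x) (bw y))).
  rewrite [in RHS](eq_bigr (fun i : 'I_N => a *: (gam i x *: vv i) + gam i y *: vv i)); last first.
    by move=> i _; rewrite scalerDl scalerA.
  by rewrite big_split /= scalerDr scaler_sumr /gam addrACA.
transitivity (ext N (fun i => a * gam i x + gam i y) j).
  exact: (gam_unique j (A0_closed a hux huy) hdec).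
rewrite /ext.
case: (ltnP j N) => hj //.
rewrite /N in hj.
have g1 : gam j x = 0 by apply: gam_bw; apply: leq_trans (leq_maxl _ _) hj.
have g2 : gam j y = 0 by apply: gam_bw; apply: leq_trans (leq_maxr _ _) hj.
by rewrite g1 g2 mulr0 addr0.
Qed.

Lemma gam0 j : gam j 0 = 0.
Proof.
transitivity (ext 0 (fun _ => 0) j); last by [].
apply: (gam_unique j (or_intror erefl)).
by rewrite big_ord0 addr0.
Qed.

Lemma gam_add j x y : gam j (x + y) = gam j x + gam j y.
Proof. by have := gam_lin j 1 x y; rewrite scale1r mul1r. Qed.

Lemma gam_scale j a x : gam j (a *: x) = a * gam j x.
Proof. by have := gam_lin j a x 0; rewrite addr0 gam0 addr0. Qed.

Lemma gam_sum j n (F : 'I_n -> L) : gam j (\sum_(i < n) F i) = \sum_(i < n) gam j (F i).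
Proof. exact: (big_morph (gam j) (gam_add j) (gam0 j)). Qed.

Lemma gam_v j i : gam j (vv i) = (j == i :> nat)%:R.
Proof.
have hd : vv i = \sum_(l < i.+1) (l == i :> nat)%:R *: vv l + 0.
  rewrite addr0 (eq_bigr (fun l : 'I_i.+1 => if (l == i :> nat) then vv l else 0)); last first.
    by move=> l _; case: eqP => _; rewrite ?scale1r ?scale0r.
  by rewrite (sum_if_eq (fun l => vv l) (ltnSn i)).
transitivity (ext i.+1 (fun l => (l == i :> nat)%:R) j).
  exact: (gam_unique j (or_intror erefl) hd).
rewrite /ext.
by case: ltnP => hj //; rewrite gtn_eqF.
Qed.

Lemma no_bounded (B : E -> Prop) : bounded_basis B -> False.
Proof.
move=> [HB [k hk]].
pose Em := fun n m : nat => (fun w => gam m w *: vv n) : E.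
have Em_endo : forall n m, is_endo (Em n m).
  by move=> n m a x y; rewrite /Em gam_lin scalerDl scalerA.
pose tau := fun n => epsilon (inhabits 0%N) (fun t => SpanLe B t (Em n n)).
have htau : forall n, SpanLe B (tau n) (Em n n).
  move=> n; apply: (epsilon_spec (inhabits 0%N) (fun t => SpanLe B t (Em n n))).
  have := @endo_SpanLe K L B HB (Em n n) (Em_endo n n). exact.
pose d := fun n => (k * tau n * n).+1.
have hc_ex : forall n, exists c : nat -> K, forall N,
    SpanLe B N (fun w => \sum_(l < d n) c l *: Em n (n + l)%N w) -> (d n <= N)%N.
  move=> n; apply: (big_lower HB (x := fun l => Em n (n + l)%N)).
    by move=> l _; apply: (endo_HasRep HB); apply: Em_endo.
  move=> c hc l hl.
  have := congr1 (fun f => f (vv (n + l)%N)) hc => /=.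
  rewrite (eq_bigr (fun i : 'I_(d n) => if (i == l :> nat) then c i *: vv n else 0)); last first.
    move=> i _; rewrite /Em gam_v eqn_add2l.
    by case: eqP => _; rewrite ?scale1r ?scale0r ?scaler0.
  rewrite (sum_if_eq (fun i => c i *: vv n) hl) => /eqP.
  by rewrite scaler_eq0 (negbTE (vv_neq0 n)) orbF => /eqP.
pose c := fun n => epsilon (inhabits (fun _ : nat => (0 : K)))
  (fun c => forall N, SpanLe B N (fun w => \sum_(l < d n) c l *: Em n (n + l)%N w) -> (d n <= N)%N).
have hc : forall n N, SpanLe B N (fun w => \sum_(l < d n) c n l *: Em n (n + l)%N w) -> (d n <= N)%N.
  move=> n; exact: (epsilon_spec _ _ (hc_ex n)).
pose phi := fun n w => \sum_(l < d n) c n l * gam (n + l)%N w.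
pose D := fun w => \sum_(i < bw w) phi i w *: vv i.
have phi_bw : forall i w, (bw w <= i)%N -> phi i w = 0.
  move=> i w hi; rewrite /phi big1 // => l _; rewrite gam_bw ?mulr0 //.
  exact: leq_trans hi (leq_addr _ _).
have D_ext : forall N w, (bw w <= N)%N -> D w = \sum_(i < N) phi i w *: vv i.
  move=> N w hN; rewrite /D (@big_ord_widen _ 0 +%R (bw w) N (fun i => phi i w *: vv i) hN).
  rewrite [LHS]big_mkcond /=; apply: eq_bigr => i _; case: ifP => // /negbT.
  by rewrite -leqNgt => hi; rewrite phi_bw // scale0r.
have phi_lin : forall i a x y, phi i (a *: x + y) = a * phi i x + phi i y.
  move=> i a x y; rewrite /phi mulr_sumr -big_split /=; apply: eq_bigr => l _.
  by rewrite gam_lin mulrDr mulrCA.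
have D_endo : is_endo D.
  move=> a x y; pose N := maxn (bw (a *: x + y)) (maxn (bw x) (bw y)).
  rewrite (D_ext N) ?leq_maxl // (D_ext N x); last first.
    exact: leq_trans (leq_maxl _ _) (leq_maxr _ _).
  rewrite (D_ext N y); last exact: leq_trans (leq_maxr _ _) (leq_maxr _ _).
  rewrite scaler_sumr -big_split /=; apply: eq_bigr => i _.
  by rewrite phi_lin scalerDl scalerA.
have [M hM] := endo_SpanLe HB D_endo.
have hEM := SpanLe_comp HB hk (htau M) hM.
have hS : SpanLe B (tau M * (M * k)) (fun w => \sum_(l < d M) c M l *: Em M (M + l)%N w).
  have -> : (fun w => \sum_(l < d M) c M l *: Em M (M + l)%N w) = fun w => Em M M (D w).
    apply: funext => w; rewrite /Em.
    rewrite (D_ext (maxn (bw w) M.+1) w (leq_maxl _ _)) gam_sum.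
    rewrite (eq_bigr (fun i : 'I_(maxn (bw w) M.+1) => if (i == M :> nat) then phi M w else 0)); last first.
      move=> i _; rewrite gam_scale gam_v eq_sym.
      by case: eqP => [->|_]; rewrite ?mulr1 ?mulr0.
    rewrite (sum_if_eq (fun _ => phi M w)); last exact: leq_maxr.
    by rewrite /phi scaler_suml; apply: eq_bigr => l _; rewrite scalerA.
  exact: hEM.
have := hc M _ hS; rewrite /d; nia.
Qed.

End WithA.

Lemma inf_part : ~ (exists B : E -> Prop, bounded_basis B).
Proof.
move=> [B hB].
have [A [PA Amax]] := Zorn_bigcup PW_chain.
exact: (no_bounded PA Amax hB).
Qed.

End Inf.
Section Fin.
Variables (K : fieldType) (L : lmodType K).
Notation E := (L -> L).
Variables (n : nat) (u : 'I_n -> L).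
Hypothesis hu : vec_basis u.

Definition cu (x : L) : 'I_n -> K :=
  epsilon (inhabits (fun _ => 0)) (fun c => x = \sum_(i < n) c i *: u i).

Lemma cu_spec x : x = \sum_(i < n) cu x i *: u i.
Proof. exact: (epsilon_spec _ (fun c => x = \sum_(i < n) c i *: u i) ((proj2 hu) x)). Qed.

Lemma cu_unique x (c : 'I_n -> K) : x = \sum_(i < n) c i *: u i -> forall i, cu x i = c i.
Proof.
move=> hx i.
have hs : \sum_(i < n) (cu x i - c i) *: u i = 0.
  rewrite (eq_bigr (fun i => cu x i *: u i - c i *: u i)); last by move=> j _; rewrite scalerBl.
  by rewrite sumrB -cu_spec -hx subrr.
by have := (proj1 hu) _ hs i => /eqP; rewrite subr_eq0 => /eqP.
Qed.

Lemma cu_lin a x y i : cu (a *: x + y) i = a * cu x i + cu y i.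
Proof.
apply: (@cu_unique (a *: x + y) (fun j => a * cu x j + cu y j)).
have -> : a *: x + y = a *: \sum_(i < n) cu x i *: u i + \sum_(i < n) cu y i *: u i.
  by rewrite -!cu_spec.
rewrite scaler_sumr -big_split; apply: eq_bigr => j _.
by rewrite scalerA scalerDl.
Qed.

Lemma cu0 i : cu 0 i = 0.
Proof.
apply: (@cu_unique 0 (fun _ => 0)).
by rewrite big1 // => j _; rewrite scale0r.
Qed.

Lemma cu_add x y i : cu (x + y) i = cu x i + cu y i.
Proof. by have := cu_lin 1 x y i; rewrite scale1r mul1r. Qed.

Lemma cu_scale a x i : cu (a *: x) i = a * cu x i.
Proof. by have := cu_lin a x 0 i; rewrite addr0 cu0 addr0. Qed.

Lemma cu_sum m (F : 'I_m -> L) i : cu (\sum_(k < m) F k) i = \sum_(k < m) cu (F k) i.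
Proof. exact: (big_morph (fun x => cu x i) (fun x y => cu_add x y i) (cu0 i)). Qed.

Lemma cu_u p q : cu (u q) p = (p == q)%:R.
Proof.
apply: (@cu_unique (u q) (fun i => (i == q)%:R)).
rewrite (bigD1 q) //= eqxx scale1r big1 ?addr0 // => i /negbTE ->.
by rewrite scale0r.
Qed.

Definition Eu p q : E := fun x => cu x q *: u p.

Lemma Eu_endo p q : is_endo (Eu p q).
Proof. by move=> a x y; rewrite /Eu cu_lin scalerDl scalerA. Qed.

Definition B0 (f : E) := exists p q, f = Eu p q.

Lemma Eu_mul p q p' q' :
  endo_mul (Eu p q) (Eu p' q') = if q == p' then Eu p q' else @endo_zero K L.
Proof.
apply: funext => x; rewrite /endo_mul /Eu cu_scale cu_u.
by case: eqP => _; rewrite ?mulr1 ?mulr0 ?scale0r.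
Qed.

Lemma B0_basis : endo_basis B0.
Proof.
split; [|split].
- by move=> b [p [q ->]]; apply: Eu_endo.
- move=> m f c finj hB hz i0.
  have hB' : forall i, exists pq : 'I_n * 'I_n, f i = Eu pq.1 pq.2.
    by move=> i; have [p [q e]] := hB i; exists (p, q).
  have [PQ hPQ] := fin_all_exists hB'.
  have := congr1 (fun g => cu (g (u (PQ i0).2)) (PQ i0).1) hz.
  rewrite /endo_comb /endo_zero /= cu0 cu_sum (bigD1 i0) //= big1 ?addr0.
    by rewrite cu_scale hPQ /Eu cu_scale !cu_u !eqxx !mulr1.
  move=> i hi; rewrite cu_scale hPQ /Eu cu_scale !cu_u.
  case: eqP => [e2|ne2]; last by rewrite mul0r mulr0.
  case: eqP => [e1|ne1]; last by rewrite mulr0 mulr0.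
  exfalso; move/negP: hi; apply; apply/eqP; apply: finj.
  by rewrite (hPQ i) (hPQ i0) e2 e1.
- move=> r hr.
  have hrep : HasRep B0 r.
    have -> : r = fun x => \sum_(p < n) (fun p x => \sum_(q < n)
                   (fun q x => cu (r (u q)) p *: Eu p q x) q x) p x.
      apply: funext => x; rewrite [in LHS](cu_spec x) endo_sum //.
      rewrite exchange_big /=; apply: eq_bigr => q _.
      rewrite endoZ // [in LHS](cu_spec (r (u q))) scaler_sumr.
      by apply: eq_bigr => p _; rewrite /Eu !scalerA mulrC.
    apply: HasRep_sum => p; apply: HasRep_sum => q; apply: HasRep_scale.
    by exists 1%N, (fun _ => Eu p q), (fun _ => 1); apply: Rep1; exists p, q.
  have [m [h [e [hB ->]]]] := hrep.
  exists m, (fun i : 'I_m => h i), (fun i : 'I_m => e i); split => //.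
  by move=> i; apply: hB.
Qed.

Lemma fin_mult : exists B : E -> Prop, multiplicative_basis B.
Proof.
exists B0; split; first exact: B0_basis.
move=> b b' [p [q ->]] [p' [q' ->]]; rewrite Eu_mul.
by case: eqP => _; [right; exists p, q' | left].
Qed.

Section Strong.
Variable B : E -> Prop.
Hypothesis HB : endo_basis B.
Hypothesis Hs : forall b b', B b -> B b' -> B (endo_mul b b').

Lemma eps_b b : B b -> Phi B (fun _ => 1) b = 1.
Proof. by move=> hb; rewrite (Phi_spec HB _ (Rep1 hb)) big_ord1 mul1r. Qed.

Lemma eps_left b x : B b -> HasRep B x ->
  HasRep B (fun w => b (x w)) /\ Phi B (fun _ => 1) (fun w => b (x w)) = Phi B (fun _ => 1) x.
Proof.
move=> hb [m [h [e [hB ->]]]].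
have hend := proj1 HB b hb.
have hr : Rep B (fun w => b (ncomb m h e w)) m (fun k => endo_mul b (h k)) e.
  split; first by move=> k hk; apply: Hs => //; apply: hB.
  apply: funext => w; rewrite /ncomb endo_sum //.
  by apply: eq_bigr => k _; rewrite endoZ.
split; first by exists m, (fun k => endo_mul b (h k)), e.
by rewrite (Phi_spec HB _ hr) (Phi_spec HB _ (conj hB erefl)).
Qed.

Lemma eps_mul y x : HasRep B y -> HasRep B x ->
  Phi B (fun _ => 1) (fun w => y (x w)) = Phi B (fun _ => 1) y * Phi B (fun _ => 1) x.
Proof.
move=> [m [h [e [hB ->]]]] hx.
have -> : (fun w => ncomb m h e (x w)) =
   fun w => \sum_(k < m) (fun k : 'I_m => e k) k *: (fun (k : 'I_m) w => h k (x w)) k w by [].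
rewrite (Phi_sum HB (fun _ => 1) (X := fun (k : 'I_m) w => h k (x w)) (fun k : 'I_m => e k)); last first.
  by move=> k; apply: (proj1 (eps_left (hB k (ltn_ord k)) hx)).
rewrite (Phi_spec HB _ (conj hB erefl)) mulr_suml; apply: eq_bigr => k _.
by rewrite (proj2 (eps_left (hB k (ltn_ord k)) hx)) mulr1.
Qed.

End Strong.

Hypothesis hn : (1 < n)%N.

Lemma fin_no_strong : ~ exists B : E -> Prop, strong_multiplicative_basis B.
Proof.
move=> [B [HB Hs]].
have hE : forall p q, HasRep B (Eu p q) by move=> p q; apply: (endo_HasRep HB); apply: Eu_endo.
have hpq : forall p q, p != q -> Phi B (fun _ => 1) (Eu p q) = 0.
  move=> p q hpq.
  have := eps_mul HB Hs (hE p q) (hE p q).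
  have -> : (fun w => Eu p q (Eu p q w)) = fun _ => 0.
    by have := Eu_mul p q p q; rewrite eq_sym (negbTE hpq).
  rewrite (Phi0 HB) => /eqP; rewrite eq_sym mulf_eq0 orbb => /eqP //.
pose i0 : 'I_n := Ordinal (ltn_trans (ltn0Sn 0) hn).
pose i1 : 'I_n := Ordinal hn.
have hpp : forall p, Phi B (fun _ => 1) (Eu p p) = 0.
  move=> p; pose q := if p == i0 then i1 else i0.
  have hq : p != q.
    by rewrite /q; case: (eqVneq p i0) => [->|hp].
  have := eps_mul HB Hs (hE p q) (hE q p).
  have -> : (fun w => Eu p q (Eu q p w)) = Eu p p.
    by have := Eu_mul p q q p; rewrite eqxx.
  by rewrite (hpq p q hq) mul0r.
have hid : Phi B (fun _ => 1) (fun w => w) = 0.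
  have -> : (fun w : L => w) = fun w => \sum_(p < n) (fun _ => 1) p *: (fun p => Eu p p) p w.
    apply: funext => w; rewrite [in LHS](cu_spec w); apply: eq_bigr => p _.
    by rewrite /Eu scale1r.
  rewrite (Phi_sum HB _ (X := fun p => Eu p p)) //.
  by rewrite big1 // => p _; rewrite hpp mulr0.
have hidr : HasRep B (fun w : L => w) by apply: (endo_HasRep HB).
have [m [h [e [hB hrep]]]] := hidr.
case: m h e hB hrep => [|m] h e hB hrep.
  have h0 : u i0 = 0 by have := congr1 (fun f => f (u i0)) hrep; rewrite /ncomb big_ord0.
  have hs : \sum_(i < n) (i == i0)%:R *: u i = 0.
    rewrite (bigD1 i0) // eqxx scale1r /= big1 ?addr0 //.
    by move=> i /negbTE ->; rewrite scale0r.
  have := (proj1 hu) _ hs i0; rewrite eqxx => /eqP; rewrite oner_eq0 //.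
have hb : B (h 0%N) by apply: hB.
have := eps_mul HB Hs (endo_HasRep HB (proj1 HB _ hb)) hidr.
rewrite hid mulr0 => /eqP.
have -> : (fun w => h 0%N w) = h 0%N by [].
by rewrite eps_b // oner_eq0.
Qed.

End Fin.

Theorem theorem5p7 (K : fieldType) (L : lmodType K) :
  (forall n : nat, (1 < n)%N -> has_dim L n ->
     (exists B : (L -> L) -> Prop, @multiplicative_basis K L B) /\
     ~ (exists B : (L -> L) -> Prop, @strong_multiplicative_basis K L B)) /\
  (infinite_dim L -> ~ (exists B : (L -> L) -> Prop, @bounded_basis K L B)).
Proof.
split.
  move=> n hn [u hu]; split; first exact: (fin_mult hu).
  exact: (fin_no_strong hu hn).
by move=> hinf; apply: inf_part.
Qed.
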